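(* For any compilation chain and any trace relation ${\sim}\subseteq\mathit{Trace}_S\times\mathit{Trace}_T$, with existential and universal images $\tilde\tau,\tilde\sigma$ lifted to hyperproperties, the following are equivalent: (i) $\mathit{SCHP}^{\tilde\tau}$: for every source program $W$ and every subset-closed source hyperproperty $H_S$, if $W\models H_S$ then $W{\downarrow}\models \mathit{Cl}_\subseteq(\tilde\tau(H_S))$; (ii) $\mathit{CC}^{\sim}$; (iii) $\mathit{SCHP}^{\tilde\sigma}$: for every source program $W$ and every subset-closed target hyperproperty $H_T$, if $W\models \mathit{Cl}_\subseteq(\tilde\sigma(H_T))$ then $W{\downarrow}\models H_T$.
   Context: A compilation chain consists of a set of source (whole) programs $W$, target programs, sets $\mathit{Trace}_S$, $\mathit{Trace}_T$ of source and target traces, semantics relations $W\rightsquigarrow t$ (program $W$ can produce trace $t$) at both levels, and a compiler $W\mapsto W{\downarrow}$. The behavior of a program is $\mathit{beh}(W)=\{t\mid W\rightsquigarrow t\}$. A hyperproperty is a set of trace properties (sets of traces); $W\models H$ iff $\mathit{beh}(W)\in H$. $H$ is subset-closed iff $\pi\in H$ and $\pi'\subseteq\pi$ imply $\pi'\in H$. $\mathit{Cl}_\subseteq(H)=\{\pi\mid\exists\pi'\in H.\ \pi\subseteq\pi'\}$. The existential image of $\sim$ is $\tilde\tau(\pi)=\{t\mid\exists s.\ s\sim t\wedge s\in\pi\}$ and its universal image is $\tilde\sigma(\pi)=\{s\mid\forall t.\ s\sim t\Rightarrow t\in\pi\}$; they are lifted to hyperproperties by $\tilde\tau(H_S)=\{\tilde\tau(\pi)\mid\pi\in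 H_S\}$ and $\tilde\sigma(H_T)=\{\tilde\sigma(\pi)\mid\pi\in H_T\}$. $\mathit{CC}^{\sim}$ states: for every $W$ and $t$, if $W{\downarrow}\rightsquigarrow t$ then there is $s\sim t$ with $W\rightsquigarrow s$. *)

(* Defs.v *)
Set Implicit Arguments.

Record CompChain := {
  ProgS : Type; ProgT : Type;
  TraceS : Type; TraceT : Type;
  semS : ProgS -> TraceS -> Prop;
  semT : ProgT -> TraceT -> Prop;
  compile : ProgS -> ProgT
}.

Definition prop (T : Type) := T -> Prop.
Definition hprop (T : Type) := prop T -> Prop.

Definition subset {T} (p q : prop T) : Prop := forall t, p t -> q t.
Definition seteq {T} (p q : prop T) : Prop := forall t, p t <-> q t.

Definition behS {C : CompChain} (W : ProgS C) : prop (TraceS C) := semS C W.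
Definition behT {C : CompChain} (W : ProgT C) : prop (TraceT C) := semT C W.

Definition satS {C : CompChain} (W : ProgS C) (H : hprop (TraceS C)) := H (behS W).
Definition satT {C : CompChain} (W : ProgT C) (H : hprop (TraceT C)) := H (behT W).

Definition subset_closed {T} (H : hprop T) : Prop :=
  forall p p', H p -> subset p' p -> H p'.

Definition Cl_sub {T} (H : hprop T) : hprop T :=
  fun p => exists p', H p' /\ subset p p'.

Definition tau_img {S T} (rel : S -> T -> Prop) (p : prop S) : prop T :=
  fun t => exists s, rel s t /\ p s.
Definition sigma_img {S T} (rel : S -> T -> Prop) (p : prop T) : prop S :=
  fun s => forall t, rel s t -> p t.

(* liftings to hyperproperties: images of sets of sets (set equality is extensional) *)
Definition tau_hyp {S T} (rel : S -> T -> Prop) (H : hprop S) : hprop T :=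
  fun q => exists p, H p /\ seteq q (tau_img rel p).
Definition sigma_hyp {S T} (rel : S -> T -> Prop) (H : hprop T) : hprop S :=
  fun q => exists p, H p /\ seteq q (sigma_img rel p).

Definition SCHP_tau (C : CompChain) (rel : TraceS C -> TraceT C -> Prop) : Prop :=
  forall (W : ProgS C) (HS : hprop (TraceS C)), subset_closed HS ->
    satS W HS -> satT (compile C W) (Cl_sub (tau_hyp rel HS)).

Definition CC (C : CompChain) (rel : TraceS C -> TraceT C -> Prop) : Prop :=
  forall (W : ProgS C) (t : TraceT C), semT C (compile C W) t ->
    exists s, rel s t /\ semS C W s.

Definition SCHP_sigma (C : CompChain) (rel : TraceS C -> TraceT C -> Prop) : Prop :=
  forall (W : ProgS C) (HT : hprop (TraceT C)), subset_closed HT ->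
    satS W (Cl_sub (sigma_hyp rel HT)) -> satT (compile C W) HT.

(* Main.v *)
Require Import Defs.

Theorem theorem2p11 (C : CompChain) (rel : TraceS C -> TraceT C -> Prop) :
  (SCHP_tau C rel <-> CC C rel) /\ (CC C rel <-> SCHP_sigma C rel).
Proof.
  unfold SCHP_tau, CC, SCHP_sigma, satS, satT, behS, behT, Cl_sub,
    tau_hyp, sigma_hyp, subset_closed, subset, seteq, tau_img, sigma_img.
  split; split.
  - intros H W t Ht.
    destruct (H W (fun p => forall t, p t -> semS C W t)) as [p' [[p [Hp Heq]] Hsub]].
    + intros p q Hp Hq s Hs. apply Hp, Hq, Hs.
    + auto.
    + apply Hsub in Ht. apply (proj1 (Heq t)) in Ht. destruct Ht as [s [Hr Hs]].
      exists s. split; auto.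
  - intros H W HS _ HW.
    exists (fun t => exists s, rel s t /\ semS C W s). split.
    + exists (semS C W). split; [exact HW | intro; tauto].
    + intros t Ht. apply H, Ht.
  - intros H W HT Hcl [p' [[pT [HpT Heq]] Hsub]].
    apply (Hcl pT); [exact HpT|].
    intros t Ht. destruct (H W t Ht) as [s [Hr Hs]].
    exact (proj1 (Heq s) (Hsub s Hs) t Hr).
  - intros H W t Ht.
    refine (H W (fun q => forall t, q t -> exists s, rel s t /\ semS C W s) _ _ t Ht).
    + intros p q Hp Hq u Hu. apply Hp, Hq, Hu.
    + exists (fun s => forall t, rel s t -> exists s, rel s t /\ semS C W s). split.
      * exists (fun t => exists s, rel s t /\ semS C W s). split; [auto | intro; tauto].
      * intros s Hs u Hu. eauto.
Qed.
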